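(* Let $(A,\to,1)$ be an algebra of type $(2,0)$ satisfying (Re), (M), (B) and (An). Then $(A,\to,1)$ satisfies (Ex) if and only if it satisfies (BB).
   Context: Properties, required for all $x,y,z\in A$: (Re) $x\to x=1$; (M) $1\to x=x$; (B) $(y\to z)\to((x\to y)\to(x\to z))=1$; (An) $x\to y=1$ and $y\to x=1$ imply $x=y$; (Ex) $x\to(y\to z)=y\to(x\to z)$; (BB) $(y\to z)\to((z\to x)\to(y\to x))=1$. *)

(* Defs.v *)
Definition prop_Re {A : Type} (imp : A -> A -> A) (one : A) : Prop :=
  forall x : A, imp x x = one.

Definition prop_M {A : Type} (imp : A -> A -> A) (one : A) : Prop :=
  forall x : A, imp one x = x.

Definition prop_B {A : Type} (imp : A -> A -> A) (one : A) : Prop :=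
  forall x y z : A, imp (imp y z) (imp (imp x y) (imp x z)) = one.

Definition prop_An {A : Type} (imp : A -> A -> A) (one : A) : Prop :=
  forall x y : A, imp x y = one -> imp y x = one -> x = y.

Definition prop_Ex {A : Type} (imp : A -> A -> A) : Prop :=
  forall x y z : A, imp x (imp y z) = imp y (imp x z).

Definition prop_BB {A : Type} (imp : A -> A -> A) (one : A) : Prop :=
  forall x y z : A, imp (imp y z) (imp (imp z x) (imp y x)) = one.

(* Main.v *)
Require Import Defs.

Theorem theorem2p4 (A : Type) (imp : A -> A -> A) (one : A)
  (hRe : prop_Re imp one) (hM : prop_M imp one)
  (hB : prop_B imp one) (hAn : prop_An imp one) :
  prop_Ex imp <-> prop_BB imp one.
Proof.
  unfold prop_Ex, prop_BB, prop_B, prop_An, prop_M in *.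
  split.
  - intros hEx x y z. rewrite hEx. apply hB.
  - intros hBB.
    assert (tr : forall a b c, imp a b = one -> imp b c = one -> imp a c = one).
    { intros a b c H1 H2. pose proof (hB a b c) as H. rewrite H2, hM, H1, hM in H. exact H. }
    assert (anti : forall a b c, imp a b = one -> imp (imp b c) (imp a c) = one).
    { intros a b c H1. pose proof (hBB c a b) as H. rewrite H1, hM in H. exact H. }
    assert (C : forall z x, imp z (imp (imp z x) x) = one).
    { intros z x. pose proof (hBB x one z) as H. rewrite !hM in H. exact H. }
    assert (L : forall x y z, imp (imp x (imp y z)) (imp y (imp x z)) = one).
    { intros x y z. eapply tr. apply (hBB z x (imp y z)). apply anti. apply C. }
    intros x y z. apply hAn; apply L.
Qed.
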